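(* Let $V$ be a vector space (of arbitrary dimension) over a field $K$, let $R=\mathrm{End}_K(V)$, and let $a\in R$. Then there exists an idempotent $e\in aRa$ such that $(a(1-e))^2=0$.
   Context: Elements of $\mathrm{End}_K(V)$ act on the left of $V$, and the ring multiplication is composition. *)

(* Defs.v *)
From HB Require Import structures.
From mathcomp Require Import all_boot all_order all_algebra.
Set Implicit Arguments. Unset Strict Implicit. Unset Printing Implicit Defensive.
Import GRing.Theory.
Local Open Scope ring_scope.

(* End_K(V): K-linear endomorphisms of a K-vector space V (any dimension),
   acting on the left; ring product = composition, 1 = identity. *)
Notation endo V := {linear V -> V}.

(* Main.v *)
Require Import Defs.
From HB Require Import structures.
From mathcomp Require Import all_boot all_order all_algebra.
From mathcomp Require Import boolp classical_sets.
Import GRing.Theory.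
Local Open Scope ring_scope.

Section Lin.
Variables (K : fieldType) (V : lmodType K).

Definition subsp (A : V -> Prop) := A 0 /\ forall k x y, A x -> A y -> A (k *: x + y).

Lemma subspD A : subsp A -> forall x y, A x -> A y -> A (x + y).
Proof. by case=> _ H x y Ax Ay; have := H 1 x y Ax Ay; rewrite scale1r. Qed.
Lemma subspZ A : subsp A -> forall k x, A x -> A (k *: x).
Proof. by case=> H0 H k x Ax; have := H k x 0 Ax H0; rewrite addr0. Qed.
Lemma subspN A : subsp A -> forall x, A x -> A (- x).
Proof. by move=> hA x Ax; rewrite -scaleN1r; apply: subspZ. Qed.
Lemma subspB A : subsp A -> forall x y, A x -> A y -> A (x - y).
Proof. by move=> hA x y Ax Ay; apply: subspD => //; apply: subspN. Qed.

Lemma compl A : subsp A -> exists B, subsp B /\ (forall x, A x -> B x -> x = 0)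
  /\ forall v, exists x y, A x /\ B y /\ v = x + y.
Proof.
move=> hA.
pose P (B : set V) := (forall k x y, B x -> B y -> B (k *: x + y)) /\
   (forall x, A x -> B x -> x = 0).
have [|B0 [[cl dis] mx]] := @Zorn_bigcup V P.
  move=> F FP tot; split.
    move=> k x y [X FX Xx] [Y FY Yy].
    have [XY|YX] := tot _ _ FX FY.
      exists Y => //; apply: (proj1 (FP _ FY)) => //; exact: XY.
    exists X => //; apply: (proj1 (FP _ FX)) => //; exact: YX.
  by move=> x Ax [X FX Xx]; apply: (proj2 (FP _ FX)).
pose B := fun x => B0 x \/ x = 0.
have hB : subsp B.
  split; first by right.
  move=> k x y [Bx|->] [By|->].
  - by left; apply: cl.
  - left; rewrite addr0; have -> : k *: x = (k - 1) *: x + x.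
      by rewrite scalerBl scale1r subrK.
    by apply: cl.
  - by left; rewrite scaler0 add0r.
  - by right; rewrite scaler0 addr0.
exists B; split => //; split.
  by move=> x Ax [Bx|->] //; apply: dis.
move=> v; apply: contrapT => nd.
pose B' := fun z => exists b k, B b /\ z = b + k *: v.
apply: (mx B'); last first.
  split.
    move=> k x y [b1 [k1 [Bb1 ->]]] [b2 [k2 [Bb2 ->]]].
    exists (k *: b1 + b2), (k * k1 + k2); split.
      by case: hB => _ H; apply: H.
    by rewrite scalerDr scalerDl scalerA addrACA.
  move=> x Ax [b [k [Bb xE]]].
  have [k0|k0] := eqVneq k 0.
    move: xE; rewrite k0 scale0r addr0 => xE; subst x.
    by case: Bb => [Bb|//]; apply: dis.
  exfalso; apply: nd; exists (k^-1 *: x), (- (k^-1 *: b)); split.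
    exact: subspZ.
  split; first by apply: subspN => //; apply: subspZ.
  rewrite xE scalerDr scalerA mulVf // scale1r.
  by rewrite addrC addrA addNr add0r.
split.
  by move=> x Bx; exists x, 0; split; [left | rewrite scale0r addr0].
move=> sub; apply: nd; exists 0, v; split; first by case: hA.
split; last by rewrite add0r.
have [b [k [Bb vE]]] : B' v by exists 0, 1; split; [right | rewrite scale1r add0r].
by left; apply: sub; exists 0, 1; split; [right| rewrite scale1r add0r].
Qed.

Lemma proj A B : subsp A -> subsp B -> (forall x, A x -> B x -> x = 0) ->
  exists p : {linear V -> V}, (forall x, A x -> p x = x) /\
     (forall y, B y -> p y = 0) /\ (forall v, A (p v)).
Proof.
move=> hA hB dAB.
pose S := fun z => exists x y, A x /\ B y /\ z = x + y.
have hS : subsp S.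
  split; first by exists 0, 0; split; [case: hA|split; [case: hB|rewrite addr0]].
  move=> k _ _ [x1 [y1 [A1 [B1 ->]]]] [x2 [y2 [A2 [B2 ->]]]].
  exists (k *: x1 + x2), (k *: y1 + y2); split; first by case: hA => _; apply.
  split; first by case: hB => _; apply.
  by rewrite scalerDr addrACA.
have [E [hE [dSE spE]]] := @compl S hS.
pose B' := fun z => exists y e, B y /\ E e /\ z = y + e.
have hB' : subsp B'.
  split; first by exists 0, 0; split; [case: hB|split; [case: hE|rewrite addr0]].
  move=> k _ _ [x1 [y1 [A1 [B1 ->]]]] [x2 [y2 [A2 [B2 ->]]]].
  exists (k *: x1 + x2), (k *: y1 + y2); split; first by case: hB => _; apply.
  split; first by case: hE => _; apply.
  by rewrite scalerDr addrACA.
have dAB' : forall w, A w -> B' w -> w = 0.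
  move=> w Aw [y [e [By [Ee wE]]]].
  have e0 : e = 0.
    apply: dSE => //; exists w, (- y); split => //; split; first exact: subspN.
    by rewrite wE addrC addrA addNr add0r.
  by move: wE; rewrite e0 addr0 => wE; subst w; apply: dAB.
have uniq : forall x1 x2 v, A x1 -> A x2 -> B' (v - x1) -> B' (v - x2) -> x1 = x2.
  move=> x1 x2 v A1 A2 B1 B2; apply/eqP; rewrite -subr_eq0; apply/eqP.
  apply: dAB'; first exact: subspB.
  have -> : x1 - x2 = (v - x2) - (v - x1) by rewrite opprB [in RHS]addrC addrA subrK.
  exact: subspB.
have dec : forall v, exists x, A x /\ B' (v - x).
  move=> v; have [s [e [[x [y [Ax [By ->]]]] [Ee ->]]]] := spE v.
  exists x; split => //; exists y, e; split => //; split => //.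
  by rewrite (addrC x) addrAC addrK.
pose p v := proj1_sig (cid (dec v)).
have pA v : A (p v) by rewrite /p; case: cid => x [].
have pB v : B' (v - p v) by rewrite /p; case: cid => x [].
have plin : linear p.
  move=> k u w; apply: (uniq _ _ (k *: u + w)); [exact: pA| |exact: pB|].
    by case: hA => _; apply.
  have -> : k *: u + w - (k *: p u + p w) = k *: (u - p u) + (w - p w).
    by rewrite scalerBr opprD addrACA.
  by case: hB' => _; apply.
exists (HB.pack_for {linear V -> V} p (GRing.isLinear.Build K V V *:%R p plin)).
split => /=.
  move=> x Ax; apply: (uniq _ _ x) => //; rewrite subrr; by case: hB'.
split => //.
move=> y By; apply: (uniq _ _ y) => //; first by case: hA.
  by rewrite subr0; exists y, 0; split => //; split; [case: hE| rewrite addr0].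
Qed.

End Lin.

Theorem lemma2p9 (K : fieldType) (V : lmodType K) (a : {linear V -> V}) :
  exists (r : {linear V -> V}) (e : V -> V),
    (* e = a r a, an element of aRa *)
    e =1 a \o r \o a /\
    (* e is idempotent *)
    e \o e =1 e /\
    (* (a (1 - e))^2 = 0 *)
    (a \o (fun v => v - e v)) \o (a \o (fun v => v - e v)) =1 (fun _ => 0).
Proof.
have mk : forall f : V -> V, linear f -> exists g : {linear V -> V}, g =1 f.
  move=> f H.
  by exists (HB.pack_for {linear V -> V} f (GRing.isLinear.Build K V V *:%R f H)).
pose U := fun z => exists w, z = a w.
pose N := fun z => a z = 0.
pose Z := fun z : V => z = 0.
have hU : @subsp K V U.
  split; first by exists 0; rewrite linear0.
  by move=> k _ _ [w1 ->] [w2 ->]; exists (k *: w1 + w2); rewrite linearP.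
have hN : @subsp K V N.
  split; first by rewrite /N linear0.
  by move=> k x y; rewrite /N linearP => -> ->; rewrite scaler0 addr0.
have hZ : @subsp K V Z.
  split; first by [].
  by move=> k x y; rewrite /Z => -> ->; rewrite scaler0 addr0.
pose M := fun z => U z /\ N z.
have hM : @subsp K V M.
  split; first by split; [case: hU|case: hN].
  move=> k x y [Ux Nx] [Uy Ny]; split; [by case: hU => _; apply|by case: hN => _; apply].
have [q [qM [_ qim]]] := @proj K V M Z hM hZ (fun x _ (h : Z x) => h).
pose C := fun z => U z /\ q z = 0.
have hC : @subsp K V C.
  split; first by split; [case: hU|rewrite linear0].
  move=> k x y [Ux qx] [Uy qy]; split; first by case: hU => _; apply.
  by rewrite linearP qx qy scaler0 addr0.
have dCN : forall x, C x -> N x -> x = 0.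
  by move=> x [Ux qx] Nx; rewrite -qx qM.
have [e [eC [eN eim]]] := @proj K V C N hC hN dCN.
have [pU [pUU [_ pUim]]] := @proj K V U Z hU hZ (fun x _ (h : Z x) => h).
have [pN [pNN [_ pNim]]] := @proj K V N Z hN hZ (fun x _ (h : Z x) => h).
have pre : forall z, exists w, a w = pU z.
  by move=> z; have [w ->] := pUim z; exists w.
pose pr z := proj1_sig (cid (pre z)).
have apr z : a (pr z) = pU z by rewrite /pr; case: cid.
have [qN qNE] : exists f : {linear V -> V}, f =1 fun v => v - pN v.
  apply: mk => k x y; by rewrite linearP opprD addrACA scalerBr.
have [G GE] : exists G : {linear V -> V}, G =1 fun z => qN (pr z).
  apply: mk => k u w.
  pose d := pr (k *: u + w) - (k *: pr u + pr w).
  have Nd : N d by rewrite /N /d linearB linearP !apr linearP subrr.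
  have -> : pr (k *: u + w) = k *: pr u + pr w + d by rewrite /d [RHS]addrC subrK.
  by rewrite linearD (qNE d) pNN // subrr addr0 linearP.
have aG z : a (G z) = pU z.
  by rewrite GE qNE linearB apr pNim subr0.
have aGU z : U z -> a (G z) = z by move=> Uz; rewrite aG pUU.
have [Rl RE] : exists R : {linear V -> V}, R =1 fun v => G (e (G v)).
  by apply: mk => k x y; rewrite !linearP.
exists Rl, (fun v => e v); split.
  move=> v /=; rewrite RE.
  have -> : e (G (a v)) = e v.
    have -> : G (a v) = v + (G (a v) - v) by rewrite addrC subrK.
    rewrite linearD (eN (G (a v) - v)) ?addr0 //.
    by rewrite /N linearB aG pUU ?subrr //; exists v.
  by rewrite aGU //; case: (eim v).
split; first by move=> v /=; rewrite eC.
move=> v /=.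
have key : forall x, U x -> a (x - e x) = 0.
  move=> x Ux.
  have [Uqx Nqx] := qim x.
  have Cy : C (x - q x).
    split; first exact: subspB.
    by rewrite linearB (qM _ (qim x)) subrr.
  have -> : e x = x - q x.
    by rewrite -{1}(subrK (q x) x) linearD (eN (q x)) // eC // addr0.
  by rewrite opprB addrC subrK.
by apply: key; exists (v - e v).
Qed.
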